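(* In the category $\mathcal H'$ described in the context, for every integer $k\ge1$ the following equality holds in $\mathrm{End}_{\mathcal H'}(\mathbf 1)$: \[\tilde c_{k+1}=\sum_{a=0}^{k-1}\tilde c_a\, c_{k-1-a}.\]
   Context: Let $\Bbbk$ be a commutative ring. The category $\mathcal{H}'$ is the $\Bbbk$-linear additive strict monoidal category defined as follows. For a finite sign sequence $\epsilon=\epsilon_1\cdots\epsilon_m$ there is an object $Q_\epsilon=Q_{\epsilon_1}\otimes\cdots\otimes Q_{\epsilon_m}$, $Q_\epsilon\otimes Q_{\epsilon'}=Q_{\epsilon\epsilon'}$, unit $\mathbf 1=Q_\emptyset$; general objects are finite formal direct sums. $\mathrm{Hom}(Q_\epsilon,Q_{\epsilon'})$ ($\epsilon$ of length $m$, $\epsilon'$ of length $k$) is the $\Bbbk$-module spanned by planar diagrams: compact oriented $1$-manifolds immersed in $\mathbb R\times[0,1]$ with only transverse double points, boundary $\{1,\dots,m\}\times\{0\}\cup\{1,\dots,k\}\times\{1\}$, the strand pointing upward at the $i$-th lower (resp. $j$-th upper) endpoint iff $\epsilon_i=+$ (resp. $\epsilon'_j=+$); up to isotopy rel boundary and modulo local relations. Composition is stacking, $\otimes$ is juxtaposition. With $X\in\mathrm{End}(Q_{++})$ the crossing of two upward strands, $\mathrm{cup}_{+-}:\mathbf 1\to Q_{+-}$, $\mathrm{cup}_{-+}:\mathbf 1\to Q_{-+}$, $\mathrm{cap}_{+-}:Q_{+-}\to\mathbf 1$, $\mathrm{cap}_{-+}:Q_{-+}\to\mathbf 1$ the oriented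 U-turns, and $Y:Q_{+-}\to Q_{-+}$, $Y':Q_{-+}\to Q_{+-}$ the mixed crossings, the relations are: $X^2=\mathrm{id}$; braid relation for $X$ on $Q_{+++}$; $Y'Y=\mathrm{id}_{Q_{+-}}$; $YY'=\mathrm{id}_{Q_{-+}}-\mathrm{cup}_{-+}\mathrm{cap}_{-+}$; $\mathrm{cap}_{-+}\mathrm{cup}_{-+}=\mathrm{id}_{\mathbf 1}$; $(\mathrm{cap}_{-+}\otimes\mathrm{id}_{Q_+})(\mathrm{id}_{Q_-}\otimes X)(\mathrm{cup}_{-+}\otimes\mathrm{id}_{Q_+})=0$ (left curl is zero). The dot (right curl) is $x=(\mathrm{id}_{Q_+}\otimes\mathrm{cap}_{+-})(X\otimes\mathrm{id}_{Q_-})(\mathrm{id}_{Q_+}\otimes\mathrm{cup}_{+-})\in\mathrm{End}(Q_+)$. The clockwise circle with $k$ dots is $c_k=\mathrm{cap}_{+-}\circ(x^k\otimes\mathrm{id}_{Q_-})\circ\mathrm{cup}_{+-}$ and the counterclockwise circle with $k$ dots is $\tilde c_k=\mathrm{cap}_{-+}\circ(\mathrm{id}_{Q_-}\otimes x^k)\circ\mathrm{cup}_{-+}$, both in the commutative algebra $\mathrm{End}_{\mathcal H'}(\mathbf 1)$, whose product is composition. *)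

(* Defs.v *)
(* The category H' is built as a presentation:
   morphisms are (untyped) formal terms, with a computable typing function,
   modulo the smallest equivalence relation containing the strict monoidal
   k-linear category axioms, the planar-isotopy relations and the local
   relations of H'.  Signs: true = +, false = -. *)
From HB Require Import structures.
From mathcomp Require Import all_boot all_order all_algebra.
Set Implicit Arguments. Unset Strict Implicit. Unset Printing Implicit Defensive.
Import GRing.Theory.
Local Open Scope ring_scope.

Inductive gen :=
| GX
| GCupPM
| GCupMP
| GCapPM
| GCapMP
| GY
| GY'.

Definition gsrc (g : gen) : seq bool :=
  match g with
  | GX => [:: true; true] | GCupPM => [::] | GCupMP => [::]
  | GCapPM => [:: true; false] | GCapMP => [:: false; true]
  | GY => [:: true; false] | GY' => [:: false; true]
  end.
Definition gtgt (g : gen) : seq bool :=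
  match g with
  | GX => [:: true; true] | GCupPM => [:: true; false] | GCupMP => [:: false; true]
  | GCapPM => [::] | GCapMP => [::]
  | GY => [:: false; true] | GY' => [:: true; false]
  end.

Section Terms.
Variable R : comPzRingType.

(* formal expressions for morphisms; Comp s t means s o t (t first) *)
Inductive term :=
| Id (e : seq bool)
| Gen (g : gen)
| Comp (s t : term)
| Tens (s t : term)
| Zero (e f : seq bool)
| Add (s t : term)
| Scale (a : R) (s : term).

Fixpoint ty (t : term) : option (seq bool * seq bool) :=
  match t with
  | Id e => Some (e, e)
  | Gen g => Some (gsrc g, gtgt g)
  | Comp s u =>
      match ty s, ty u with
      | Some (b, c), Some (a, b') => if b == b' then Some (a, c) else None
      | _, _ => None
      end
  | Tens s u =>
      match ty s, ty u with
      | Some (a1, b1), Some (a2, b2) => Some (a1 ++ a2, b1 ++ b2)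
      | _, _ => None
      end
  | Zero e f => Some (e, f)
  | Add s u => if ty s == ty u then ty s else None
  | Scale _ s => ty s
  end.

Notation X := (Gen GX).
Notation cupPM := (Gen GCupPM).
Notation cupMP := (Gen GCupMP).
Notation capPM := (Gen GCapPM).
Notation capMP := (Gen GCapMP).
Notation Y := (Gen GY).
Notation Y' := (Gen GY').
Notation p := true.
Notation m := false.

(* basic equations; they are imposed only when both sides are well typed
   with the same type (see heq_ax) *)
Inductive ax : term -> term -> Prop :=
| ax_idl s b : ax (Comp (Id b) s) s
| ax_idr s a : ax (Comp s (Id a)) s
| ax_compA s t u : ax (Comp (Comp s t) u) (Comp s (Comp t u))
| ax_tensA s t u : ax (Tens (Tens s t) u) (Tens s (Tens t u))
| ax_tens1l s : ax (Tens (Id [::]) s) s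
| ax_tens1r s : ax (Tens s (Id [::])) s
| ax_tensId e1 e2 : ax (Tens (Id e1) (Id e2)) (Id (e1 ++ e2))
| ax_interchange s t u v :
    ax (Comp (Tens s t) (Tens u v)) (Tens (Comp s u) (Comp t v))
| ax_addA s t u : ax (Add (Add s t) u) (Add s (Add t u))
| ax_addC s t : ax (Add s t) (Add t s)
| ax_add0 e f s : ax (Add (Zero e f) s) s
| ax_scale0 e f s : ax (Scale 0 s) (Zero e f)
| ax_scale1 s : ax (Scale 1 s) s
| ax_scaleM a b s : ax (Scale (a * b) s) (Scale a (Scale b s))
| ax_scaleDl a b s : ax (Scale (a + b) s) (Add (Scale a s) (Scale b s))
| ax_scaleDr a s t : ax (Scale a (Add s t)) (Add (Scale a s) (Scale a t))
| ax_compDl s t u : ax (Comp (Add s t) u) (Add (Comp s u) (Comp t u))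
| ax_compDr s t u : ax (Comp u (Add s t)) (Add (Comp u s) (Comp u t))
| ax_compZl a s t : ax (Comp (Scale a s) t) (Scale a (Comp s t))
| ax_compZr a s t : ax (Comp s (Scale a t)) (Scale a (Comp s t))
| ax_comp0l b c a t : ax (Comp (Zero b c) t) (Zero a c)
| ax_comp0r a b c s : ax (Comp s (Zero a b)) (Zero a c)
| ax_tensDl s t u : ax (Tens (Add s t) u) (Add (Tens s u) (Tens t u))
| ax_tensDr s t u : ax (Tens u (Add s t)) (Add (Tens u s) (Tens u t))
| ax_tensZl a s t : ax (Tens (Scale a s) t) (Scale a (Tens s t))
| ax_tensZr a s t : ax (Tens s (Scale a t)) (Scale a (Tens s t))
| ax_tens0l e f e' f' t : ax (Tens (Zero e f) t) (Zero e' f')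
| ax_tens0r e f e' f' s : ax (Tens s (Zero e f)) (Zero e' f')
| ax_zz1 : ax (Comp (Tens (Id [:: p]) capMP) (Tens cupPM (Id [:: p]))) (Id [:: p])
| ax_zz2 : ax (Comp (Tens capPM (Id [:: p])) (Tens (Id [:: p]) cupMP)) (Id [:: p])
| ax_zz3 : ax (Comp (Tens (Id [:: m]) capPM) (Tens cupMP (Id [:: m]))) (Id [:: m])
| ax_zz4 : ax (Comp (Tens capMP (Id [:: m])) (Tens (Id [:: m]) cupPM)) (Id [:: m])
(* planar isotopy: Y is X rotated clockwise, Y' is X rotated counterclockwise *)
| ax_Yrot : ax Y
    (Comp (Tens (Id [:: m; p]) capPM)
      (Comp (Tens (Id [:: m]) (Tens X (Id [:: m])))
            (Tens cupMP (Id [:: p; m]))))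
| ax_Y'rot : ax Y'
    (Comp (Tens capMP (Id [:: p; m]))
      (Comp (Tens (Id [:: m]) (Tens X (Id [:: m])))
            (Tens (Id [:: m; p]) cupPM)))
(* planar isotopy: cyclicity (the downward crossing is well defined) *)
| ax_cyclic :
    ax (Comp (Tens (Id [:: m; m]) capPM)
         (Comp (Tens (Id [:: m]) (Tens Y (Id [:: m])))
               (Tens cupMP (Id [:: m; m]))))
       (Comp (Tens capMP (Id [:: m; m]))
         (Comp (Tens (Id [:: m]) (Tens Y' (Id [:: m])))
               (Tens (Id [:: m; m]) cupPM)))
| ax_X2 : ax (Comp X X) (Id [:: p; p])
| ax_braid :
    ax (Comp (Tens X (Id [:: p])) (Comp (Tens (Id [:: p]) X) (Tens X (Id [:: p]))))
       (Comp (Tens (Id [:: p]) X) (Comp (Tens X (Id [:: p])) (Tens (Id [:: p]) X)))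
| ax_Y'Y : ax (Comp Y' Y) (Id [:: p; m])
| ax_YY' : ax (Comp Y Y') (Add (Id [:: m; p]) (Scale (-1) (Comp cupMP capMP)))
| ax_bubble : ax (Comp capMP cupMP) (Id [::])
| ax_leftcurl :
    ax (Comp (Tens capMP (Id [:: p])) (Comp (Tens (Id [:: m]) X) (Tens cupMP (Id [:: p]))))
       (Zero [:: p] [:: p]).

Inductive heq : term -> term -> Prop :=
| heq_ax s t : ax s t -> ty s = ty t -> ty s <> None -> heq s t
| heq_refl s : ty s <> None -> heq s s
| heq_sym s t : heq s t -> heq t s
| heq_trans s t u : heq s t -> heq t u -> heq s u
| heq_comp s s' t t' : heq s s' -> heq t t' -> heq (Comp s t) (Comp s' t')
| heq_tens s s' t t' : heq s s' -> heq t t' -> heq (Tens s t) (Tens s' t')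
| heq_add s s' t t' : heq s s' -> heq t t' -> heq (Add s t) (Add s' t')
| heq_scale a s s' : heq s s' -> heq (Scale a s) (Scale a s').

(* the dot (right curl) x in End(Q_+) *)
Definition dot : term :=
  Comp (Tens (Id [:: p]) capPM) (Comp (Tens X (Id [:: m])) (Tens (Id [:: p]) cupPM)).

Fixpoint dotpow (k : nat) : term :=
  match k with 0 => Id [:: p] | k'.+1 => Comp dot (dotpow k') end.

(* clockwise circle with k dots *)

Definition c_ (k : nat) : term :=
  Comp capPM (Comp (Tens (dotpow k) (Id [:: m])) cupPM).

(* counterclockwise circle with k dots *)
Definition ct_ (k : nat) : term :=
  Comp capMP (Comp (Tens (Id [:: m]) (dotpow k)) cupMP).

Definition sum1 (s : seq term) : term := foldr Add (Zero [::] [::]) s.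

End Terms.

(* Main.v *)
Require Import Defs.
From mathcomp Require Import all_boot all_order all_algebra.
From mathcomp Require Import zify.
Set Implicit Arguments. Unset Strict Implicit. Unset Printing Implicit Defensive.


Notation I e := (Id _ e).
Notation XX := (Gen _ GX).
Notation cPM := (Gen _ GCupPM).
Notation cMP := (Gen _ GCupMP).
Notation aPM := (Gen _ GCapPM).
Notation aMP := (Gen _ GCapMP).
Notation YY := (Gen _ GY).
Notation YY' := (Gen _ GY').

Definition tyC (o1 o2 : option (seq bool * seq bool)) :=
  match o1, o2 with
  | Some (b, c), Some (a, b') => if b == b' then Some (a, c) else None
  | _, _ => None
  end.

Lemma ty_Comp {R : comPzRingType} (s t : term R) : ty (Comp s t) = tyC (ty s) (ty t).
Proof. by []. Qed.

Lemma tyC_assoc o1 o2 o3 : tyC (tyC o1 o2) o3 = tyC o1 (tyC o2 o3).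
Proof.
case: o1 => [[b c]|]; case: o2 => [[a b']|]; case: o3 => [[z a']|] => //=.
- by case E: (b == b') => //=; case: (a == a') => //=; rewrite E.
- by case: (b == b').
Qed.

Lemma heq_ty {R : comPzRingType} (s t : term R) : heq s t -> ty s = ty t.
Proof.
elim=> {s t}; intros; simpl; try congruence; by rewrite H0 H2.
Qed.

Lemma heq_l {R : comPzRingType} (s t : term R) : heq s t -> heq s s.
Proof. move=> h; exact: heq_trans h (heq_sym h). Qed.
Lemma heq_r {R : comPzRingType} (s t : term R) : heq s t -> heq t t.
Proof. move=> h; exact: heq_trans (heq_sym h) h. Qed.

Lemma tyC_none o1 o2 : tyC o1 o2 <> None -> o1 <> None /\ o2 <> None.
Proof. by case: o1 => [[]|]; case: o2 => [[]|]. Qed.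

Lemma comp_wt {R : comPzRingType} (s t : term R) :
  ty (Comp s t) <> None -> ty s <> None /\ ty t <> None.
Proof. exact: tyC_none. Qed.

Definition cm {R : comPzRingType} (b : term R) (l : seq (term R)) := foldr (@Comp R) b l.
Arguments cm : simpl never.

Lemma cm_nil {R : comPzRingType} (b : term R) : cm b [::] = b. Proof. by []. Qed.
Lemma cm_cons {R : comPzRingType} (b L : term R) l : cm b (L :: l) = Comp L (cm b l).
Proof. by []. Qed.
Lemma cm_cat {R : comPzRingType} (b : term R) l1 l2 : cm b (l1 ++ l2) = cm (cm b l2) l1.
Proof. by rewrite /cm foldr_cat. Qed.

Lemma cm_cong {R : comPzRingType} (b b' : term R) l :
  heq b b' -> ty (cm b l) <> None -> heq (cm b l) (cm b' l).
Proof.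
elim: l => [|L l IH] // hb; rewrite !cm_cons => /comp_wt [hL hl].
by apply: heq_comp; [apply: heq_refl | apply: IH].
Qed.

Definition tgt (o : option (seq bool * seq bool)) := omap snd o.

Lemma ty_cm {R : comPzRingType} (B : term R) e l :
  tgt (ty B) = Some e -> ty (cm B l) = tyC (ty (cm (Id R e) l)) (ty B).
Proof.
move=> hB; elim: l => [|L l IH].
  rewrite !cm_nil /=; case: (ty B) hB => [[a e']|] //= [->]; by rewrite eqxx.
by rewrite !cm_cons !ty_Comp IH tyC_assoc.
Qed.

Lemma cm_base {R : comPzRingType} (B : term R) e l :
  tgt (ty B) = Some e -> ty (cm B l) <> None -> heq (cm B l) (Comp (cm (Id R e) l) B).
Proof.
move=> hB; elim: l => [|L l IH].
  rewrite !cm_nil => h; apply: heq_sym; apply: heq_ax; first exact: ax_idl.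
    rewrite ty_Comp /=; case: (ty B) hB h => [[a e']|] //= [->]; by rewrite eqxx.
  rewrite ty_Comp /=; case: (ty B) hB h => [[a e']|] //= [->]; by rewrite eqxx.
rewrite !cm_cons => h; have [hL hl] := comp_wt h.
have IH' := IH hl.
apply: heq_trans; first exact: heq_comp (heq_refl hL) IH'.
apply: heq_sym; apply: heq_ax; first exact: ax_compA.
  by rewrite !ty_Comp tyC_assoc.
rewrite !ty_Comp tyC_assoc -ty_Comp -(heq_ty IH') -ty_Comp; exact: h.
Qed.

Lemma seg {R : comPzRingType} (B : term R) e m m' :
  heq (cm (Id R e) m) (cm (Id R e) m') -> tgt (ty B) = Some e ->
  ty (cm B m) <> None -> heq (cm B m) (cm B m').
Proof.
move=> h hB hm.
have hm' : ty (cm B m') <> None by rewrite (ty_cm _ hB) -(heq_ty h) -(ty_cm _ hB).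
apply: heq_trans; first exact: cm_base hB hm.
apply: heq_trans; last exact: heq_sym (cm_base hB hm').
apply: heq_comp => //; apply: heq_refl; move: hm; rewrite (ty_cm _ hB).
by case/tyC_none.
Qed.

Lemma ty_cm_none {R : comPzRingType} (B : term R) l : ty B = None -> ty (cm B l) = None.
Proof. move=> hB; elim: l => [|L l IH] //; rewrite cm_cons ty_Comp IH; by case: (ty L) => [[]|]. Qed.

Lemma stepn {R : comPzRingType} (b : term R) l i j m' e :
  heq (cm (Id R e) (take j (drop i l))) (cm (Id R e) m') ->
  tgt (ty (cm b (drop j (drop i l)))) = Some e ->
  ty (cm b l) <> None ->
  heq (cm b l) (cm b (take i l ++ m' ++ drop j (drop i l))).
Proof.
move=> h he hl.
have E : cm b l = cm (cm (cm b (drop j (drop i l))) (take j (drop i l))) (take i l).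
  by rewrite -!cm_cat -catA !cat_take_drop.
rewrite E in hl *; rewrite cm_cat.
apply: cm_cong => //; rewrite cm_cat; apply: seg h he _.
by move: hl; apply: contra_not => hn; rewrite ty_cm_none.

Qed.

Lemma add_wt {R : comPzRingType} (s t : term R) :
  ty (Add s t) <> None -> ty s = ty t /\ ty (Add s t) = ty s.
Proof. rewrite /=; case: eqP => //. Qed.

Lemma cm_add {R : comPzRingType} (b : term R) l1 A B l2 :
  ty (cm b (l1 ++ Add A B :: l2)) <> None ->
  heq (cm b (l1 ++ Add A B :: l2)) (Add (cm b (l1 ++ A :: l2)) (cm b (l1 ++ B :: l2))).
Proof.
elim: l1 => [|L l1 IH].
  rewrite !cat0s !cm_cons => h.
  apply: heq_ax; first exact: ax_compDl.
    have [h1 _] := comp_wt h; have [e1 e2] := add_wt h1.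
    by rewrite ty_Comp e2 /= e1 eqxx.
  exact: h.
rewrite !cat_cons !cm_cons => h; have [hL hl] := comp_wt h.
have IH' := IH hl.
have hty : ty (cm b (l1 ++ A :: l2)) = ty (cm b (l1 ++ B :: l2)).
  move: hl; rewrite (heq_ty IH') /=; by case: eqP.
apply: heq_trans; first exact: heq_comp (heq_refl hL) IH'.
apply: heq_ax; first exact: ax_compDr.
  by rewrite /= hty !eqxx.
by move: h; rewrite ty_Comp (heq_ty IH') /= hty eqxx.
Qed.


Ltac tyt := repeat progress (simpl; repeat (match goal with H : ty ?t = Some _ |- context [ty ?t] => rewrite H end));
  rewrite ?cats0 ?cat0s ?catA ?eqxx ?catA //.

Definition W {R : comPzRingType} a (g : term R) b := Tens (Id R a) (Tens g (Id R b)).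
Arguments W : simpl never.

Lemma ty_W {R : comPzRingType} a (g : term R) b x y : ty g = Some (x, y) ->
  ty (W a g b) = Some (a ++ x ++ b, a ++ y ++ b).
Proof. by move=> h; rewrite /W /= h. Qed.

Lemma hId {R : comPzRingType} e : heq (Id R e) (Id R e).
Proof. by apply: heq_refl. Qed.

Lemma W_cong {R : comPzRingType} a b (g g' : term R) : heq g g' -> heq (W a g b) (W a g' b).
Proof. move=> h; apply: heq_tens; first exact: hId. apply: heq_tens => //; exact: hId. Qed.

Lemma inter {R : comPzRingType} (s t u v : term R) a b c d e f :
  ty s = Some (b, c) -> ty u = Some (a, b) -> ty t = Some (e, f) -> ty v = Some (d, e) ->
  heq (Comp (Tens s t) (Tens u v)) (Tens (Comp s u) (Comp t v)).
Proof. move=> hs hu ht hv; apply: heq_ax; [exact: ax_interchange | tyt | tyt]. Qed.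

Lemma idl {R : comPzRingType} (s : term R) a b : ty s = Some (a, b) -> heq (Comp (Id R b) s) s.
Proof. move=> hs; apply: heq_ax; [exact: ax_idl | tyt | tyt]. Qed.
Lemma idr {R : comPzRingType} (s : term R) a b : ty s = Some (a, b) -> heq (Comp s (Id R a)) s.
Proof. move=> hs; apply: heq_ax; [exact: ax_idr | tyt | tyt]. Qed.
Lemma tensA {R : comPzRingType} (s t u : term R) a b c d e f :
  ty s = Some (a, b) -> ty t = Some (c, d) -> ty u = Some (e, f) ->
  heq (Tens (Tens s t) u) (Tens s (Tens t u)).
Proof. move=> hs ht hu; apply: heq_ax; [exact: ax_tensA | tyt | tyt]. Qed.
Lemma tens1l {R : comPzRingType} (s : term R) a b : ty s = Some (a, b) -> heq (Tens (Id R [::]) s) s.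
Proof. move=> hs; apply: heq_ax; [exact: ax_tens1l | tyt | tyt]. Qed.
Lemma tens1r {R : comPzRingType} (s : term R) a b : ty s = Some (a, b) -> heq (Tens s (Id R [::])) s.
Proof. move=> hs; apply: heq_ax; [exact: ax_tens1r | tyt; by rewrite !cats0 | tyt]. Qed.
Lemma tensId {R : comPzRingType} e1 e2 : heq (Tens (Id R e1) (Id R e2)) (Id R (e1 ++ e2)).
Proof. apply: heq_ax; [exact: ax_tensId | tyt | tyt]. Qed.

Lemma TI {R : comPzRingType} (t : term R) u v a b : ty t = Some (a, b) ->
  heq (Tens (Id R u) (Tens (Id R v) t)) (Tens (Id R (u ++ v)) t).
Proof.
move=> ht; apply: heq_trans; first exact: heq_sym (tensA (s:=Id R u) (t:=Id R v) (u:=t) erefl erefl ht).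
apply: heq_tens; [exact: tensId | apply: heq_refl; by rewrite ht].
Qed.
Lemma TIr {R : comPzRingType} (t : term R) u v a b : ty t = Some (a, b) ->
  heq (Tens (Tens t (Id R u)) (Id R v)) (Tens t (Id R (u ++ v))).
Proof.
move=> ht; apply: heq_trans; first exact: (tensA (s:=t) (t:=Id R u) (u:=Id R v) ht erefl erefl).
apply: heq_tens; [apply: heq_refl; by rewrite ht | exact: tensId].
Qed.

Tactic Notation "st" uconstr(L) := eapply heq_trans; first (eapply L; tyt).
Tactic Notation "sts" uconstr(L) := eapply heq_trans; first (apply: heq_sym; eapply L; tyt).

Lemma CC {R : comPzRingType} (f g : term R) x x' y y' :
  ty f = Some (x, x') -> ty g = Some (y, y') ->
  heq (Comp (Tens f (Id R y')) (Tens (Id R x) g)) (Comp (Tens (Id R x') g) (Tens f (Id R y))).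
Proof.
move=> hf hg.
st inter.
apply: heq_trans; last (apply: heq_sym; apply: inter; tyt).
apply: heq_tens.
  st idr. apply: heq_sym; apply: idl; tyt.
st idl. apply: heq_sym; apply: idr; tyt.
Qed.

Lemma W_comp {R : comPzRingType} a b (f g : term R) x y z :
  ty f = Some (y, z) -> ty g = Some (x, y) ->
  heq (Comp (W a f b) (W a g b)) (W a (Comp f g) b).
Proof.
move=> hf hg; rewrite /W.
st inter.
apply: heq_tens; first by apply: idl.
st inter.
apply: heq_tens; first by apply: heq_refl; tyt.
by apply: idl.
Qed.

Lemma W_id {R : comPzRingType} a b e : heq (W a (Id R e) b) (Id R (a ++ e ++ b)).
Proof.
rewrite /W; apply: heq_trans; first exact: heq_tens (hId a) (tensId e b).
exact: tensId.
Qed.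

Lemma W_nest {R : comPzRingType} a b a' b' (g : term R) x y : ty g = Some (x, y) ->
  heq (W a (W a' g b') b) (W (a ++ a') g (b' ++ b)).
Proof.
move=> hg; rewrite /W.
apply: heq_trans.
  apply: heq_tens; first exact: hId.
  apply: tensA; tyt.
st TI.
apply: heq_tens; first exact: hId.
by apply: TIr; tyt.
Qed.

Lemma W0 {R : comPzRingType} (g : term R) x y : ty g = Some (x, y) -> heq (W [::] g [::]) g.
Proof.
move=> hg; rewrite /W; st tens1l. by apply: tens1r; tyt.
Qed.

Lemma F1 {R : comPzRingType} a c z (f : term R) x x' : ty f = Some (x, x') ->
  heq (W a (Tens f (Id R z)) c) (W a f (z ++ c)).
Proof. move=> hf; apply: heq_tens; first exact: hId. by apply: TIr; tyt. Qed.

Lemma F2 {R : comPzRingType} a c u v (g : term R) y y' : ty g = Some (y, y') ->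
  heq (W a (Tens (Id R u) (Tens (Id R v) g)) c) (W (a ++ u ++ v) g c).
Proof.
move=> hg; rewrite /W.
apply: heq_trans.
  apply: heq_tens; first exact: hId.
  apply: tensA; tyt.
apply: heq_trans.
  apply: heq_tens; first exact: hId.
  apply: heq_tens; first exact: hId.
  apply: tensA; tyt.
apply: heq_trans.
  apply: heq_tens; first exact: hId.
  apply: TI; tyt.
by apply: TI; tyt.
Qed.

Lemma CL {R : comPzRingType} a mm c (f g : term R) x x' y y' :
  ty f = Some (x, x') -> ty g = Some (y, y') ->
  heq (Comp (W a f (mm ++ y' ++ c)) (W (a ++ x ++ mm) g c))
      (Comp (W (a ++ x' ++ mm) g c) (W a f (mm ++ y ++ c))).
Proof.
move=> hf hg.
have hG : ty (Tens (Id R mm) g) = Some (mm ++ y, mm ++ y') by tyt.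
have e1 := F1 a c (mm ++ y') hf; rewrite -catA in e1.
have e2 := F1 a c (mm ++ y) hf; rewrite -catA in e2.
have e3 := F2 a c x mm hg.
have e4 := F2 a c x' mm hg.
apply: heq_trans; first exact: heq_comp (heq_sym e1) (heq_sym e3).
apply: heq_trans; last exact: heq_comp e4 e2.
st W_comp.
apply: heq_trans; last (apply: heq_sym; eapply W_comp; tyt).
apply: W_cong.
exact: CC hf hG.
Qed.

Definition isW {R : comPzRingType} (L : term R) : option (seq bool * term R * seq bool) :=
  match L with
  | Tens (Id a') (Tens g (Id b')) => Some (a', g, b')
  | _ => None
  end.

Lemma isW_spec {R : comPzRingType} (L : term R) a' g b' : isW L = Some (a', g, b') -> L = W a' g b'.
Proof.
case: L => // s t; case: s => // a0; case: t => // g0 u; case: u => // b0 /= [<- <- <-] //.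
Qed.

Definition wk {R : comPzRingType} a b (L : term R) :=
  if isW L is Some (a', g, b') then W (a ++ a') g (b' ++ b) else W a L b.

Lemma ty_none_some {R : comPzRingType} (t : term R) : ty t <> None -> exists x y, ty t = Some (x, y).
Proof. case: (ty t) => [[x y]|] // _; by exists x, y. Qed.

Lemma wk_ok {R : comPzRingType} a b (L : term R) : ty L <> None -> heq (W a L b) (wk a b L).
Proof.
rewrite /wk; case E: (isW L) => [[[a' g] b']|] hL.
  move/isW_spec: E => E; subst L.
  move: hL; rewrite /W /=; case hg: (ty g) => [[x y]|] // _.
  exact: W_nest hg.
apply: heq_refl; have [x [y hy]] := ty_none_some hL; by rewrite /W /= hy.
Qed.

Lemma comp_some {R : comPzRingType} (s t : term R) : ty (Comp s t) <> None ->
  exists x y z, ty s = Some (y, z) /\ ty t = Some (x, y).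
Proof.
rewrite ty_Comp; case: (ty s) => [[b c]|] //; case: (ty t) => [[a b']|] //=.
case: eqP => // <- _; by exists a, b, c.
Qed.

Lemma W_cm {R : comPzRingType} a b (B : term R) l : ty (cm B l) <> None ->
  heq (W a (cm B l) b) (cm (W a B b) (map (wk a b) l)).
Proof.
elim: l => [|L l IH] h.
  rewrite !cm_nil; apply: heq_refl; have [x [y hy]] := ty_none_some h; by rewrite /W /= hy.
rewrite cm_cons /= cm_cons in h *.
have [x [y [z [hL hl]]]] := comp_some h.
apply: heq_trans; first (apply: heq_sym; apply: W_comp hL hl).
apply: heq_comp; first by apply: wk_ok; rewrite hL.
by apply: IH; rewrite hl.
Qed.

Definition src (o : option (seq bool * seq bool)) := if o is Some (a, _) then a else [::].
Definition tg (o : option (seq bool * seq bool)) := if o is Some (_, b) then b else [::].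

Fixpoint nf {R : comPzRingType} (t : term R) : seq (term R) :=
  match t with
  | Id _ => [::]
  | Comp s u => nf s ++ nf u
  | Tens s u => map (wk [::] (tg (ty u))) (nf s) ++ map (wk (src (ty s)) [::]) (nf u)
  | _ => [:: W [::] t [::]]
  end.

Lemma W_Id {R : comPzRingType} a b e : W a (Id R e) b = W a (Id R e) b. Proof. by []. Qed.

Lemma src_cm {R : comPzRingType} b l x y : ty (cm (Id R b) l) = Some (x, y) -> b = x.
Proof.
elim: l x y => [|L l IH] x y; first by rewrite cm_nil /= => -[].
rewrite cm_cons ty_Comp; case: (ty L) => [[u v]|] //=.
case E: (ty (cm (Id R b) l)) => [[u0 v0]|] //=; case: eqP => // _ [<- _]; exact: IH E.
Qed.

Lemma cm_comp {R : comPzRingType} (A B : term R) l1 l2 b e :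
  heq A (cm (Id R b) l1) -> heq B (cm (Id R e) l2) -> ty (Comp A B) <> None ->
  heq (Comp A B) (cm (Id R e) (l1 ++ l2)).
Proof.
move=> hA hB h; have [x [y [z [tA tB]]]] := comp_some h.
rewrite cm_cat.
apply: heq_trans; first exact: heq_comp hA hB.
have tB' : ty (cm (Id R e) l2) = Some (x, y) by rewrite -(heq_ty hB).
have tA' : ty (cm (Id R b) l1) = Some (y, z) by rewrite -(heq_ty hA).
have hb : b = y by exact: src_cm tA'.
subst b.
apply: heq_sym; apply: cm_base; first by rewrite tB'.
rewrite (ty_cm _ (e := y)); first by rewrite tA' tB' /= eqxx.
by rewrite tB'.
Qed.

Lemma atom_ok {R : comPzRingType} (t : term R) x y : ty t = Some (x, y) ->
  heq t (cm (Id R x) [:: W [::] t [::]]).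
Proof.
move=> ht; rewrite cm_cons cm_nil; apply: heq_sym.
have hW : ty (W [::] t [::]) = Some (x, y) by rewrite /W /= ht !cats0.
st idr. exact: W0 ht.
Qed.

Lemma W_cm_id {R : comPzRingType} a b e (l : seq (term R)) :
  ty (cm (Id R e) l) <> None ->
  heq (W a (cm (Id R e) l) b) (cm (Id R (a ++ e ++ b)) (map (wk a b) l)).
Proof.
move=> h; apply: heq_trans; first exact: W_cm h.
apply: cm_cong; first exact: W_id.
have := heq_ty (W_cm a b h) => <-.
have [x [y hy]] := ty_none_some h; by rewrite /W /= hy.
Qed.

Lemma nf_ok {R : comPzRingType} (t : term R) x y : ty t = Some (x, y) -> heq t (cm (Id R x) (nf t)).
Proof.
elim: t x y => [e|g|s IHs u IHu|s IHs u IHu|e f|s IHs u IHu|a s IHs] x y ht.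
- move: ht => /= [<- _]; rewrite cm_nil; exact: hId.
- exact: atom_ok ht.
- have [x' [y' [z' [hs hu]]]] := comp_some (t := u) (s := s) (ltac:(by rewrite ht)).
  have := ht; rewrite ty_Comp hs hu /= eqxx => -[ex ez]; subst x' z'.
  apply: cm_comp; [exact: IHs hs | exact: IHu hu | by rewrite ht].
- move: ht => /=; case hs: (ty s) => [[a1 b1]|] //; case hu: (ty u) => [[a2 b2]|] // [ex ey].
  subst x y; rewrite /=.
  apply: (heq_trans (t := Comp (Tens s (Id R b2)) (Tens (Id R a1) u))).
    apply: heq_sym; apply: heq_trans; first exact: (inter (s:=s) (t:=Id R b2) (u:=Id R a1) (v:=u) hs erefl erefl hu).
    apply: heq_tens; [exact: idr hs | exact: idl hu].
  apply: cm_comp.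
  + apply: heq_trans; first (apply: heq_sym; apply: tens1l; tyt).
    apply: heq_trans; first exact: W_cong (IHs _ _ hs).
    apply: W_cm_id; by rewrite -(heq_ty (IHs _ _ hs)) hs.
  + apply: heq_trans.
      apply: heq_tens; first exact: hId.
      apply: heq_sym; apply: tens1r; tyt.
    apply: heq_trans; first exact: W_cong (IHu _ _ hu).
    have := W_cm_id a1 [::] (l := nf u) (e := a2); rewrite cats0; apply.
    by rewrite -(heq_ty (IHu _ _ hu)) hu.
  + by rewrite /= hs hu /= eqxx.
- exact: atom_ok ht.
- exact: atom_ok ht.
- exact: atom_ok ht.
Qed.


Notation Pp := true.
Notation Mm := false.

Lemma nf_rel {R : comPzRingType} (s t : term R) x y : heq s t -> ty s = Some (x, y) ->
  heq (cm (Id R x) (nf s)) (cm (Id R x) (nf t)).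
Proof.
move=> h hs; have ht : ty t = Some (x, y) by rewrite -(heq_ty h).
apply: heq_trans; first exact: heq_sym (nf_ok hs).
apply: heq_trans; first exact: h. exact: nf_ok ht.
Qed.

Lemma wseg {R : comPzRingType} a b e0 (l l' : seq (term R)) :
  heq (cm (Id R e0) l) (cm (Id R e0) l') -> ty (cm (Id R e0) l) <> None ->
  heq (cm (Id R (a ++ e0 ++ b)) (map (wk a b) l)) (cm (Id R (a ++ e0 ++ b)) (map (wk a b) l')).
Proof.
move=> h hl; have hl' : ty (cm (Id R e0) l') <> None by rewrite -(heq_ty h).
apply: (heq_trans (heq_sym (W_cm_id a b hl))).
apply: (heq_trans _ (W_cm_id a b hl')).
exact: W_cong.
Qed.

Lemma stepn' {R : comPzRingType} (b : term R) l i j m' e l' :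
  heq (cm (Id R e) (take j (drop i l))) (cm (Id R e) m') ->
  tgt (ty (cm b (drop j (drop i l)))) = Some e ->
  ty (cm b l) <> None ->
  l' = take i l ++ m' ++ drop j (drop i l) ->
  heq (cm b l) (cm b l').
Proof. by move=> h1 h2 h3 ->; apply: (stepn h1 h2 h3). Qed.

Tactic Notation "step" constr(i) constr(j) uconstr(lp) uconstr(H) :=
  eapply heq_trans; [ eapply (@stepn' _ _ _ i j _ _ lp); [ exact H | reflexivity | vm_compute; discriminate | vm_compute; reflexivity ] | ].

Lemma cm2 {R : comPzRingType} (A B : term R) e z : ty B = Some (e, z) -> ty (Comp A B) <> None ->
  heq (cm (Id R e) [:: A; B]) (Comp A B).
Proof.
move=> hB h; rewrite !cm_cons cm_nil; have [hA hB'] := comp_wt h.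
apply: heq_comp; first exact: heq_refl.
exact: idr hB.
Qed.

Lemma cm1 {R : comPzRingType} (A : term R) e z : ty A = Some (e, z) ->
  heq (cm (Id R e) [:: A]) A.
Proof. move=> hA; rewrite !cm_cons cm_nil; exact: idr hA. Qed.

Lemma CLn {R : comPzRingType} a mm c (f g : term R) x x' y y' :
  ty f = Some (x, x') -> ty g = Some (y, y') ->
  heq (cm (Id R (a ++ x ++ mm ++ y ++ c)) [:: W a f (mm ++ y' ++ c); W (a ++ x ++ mm) g c])
      (cm (Id R (a ++ x ++ mm ++ y ++ c)) [:: W (a ++ x' ++ mm) g c; W a f (mm ++ y ++ c)]).
Proof.
move=> hf hg.
apply: heq_trans; first (apply: cm2; rewrite /W; tyt).
apply: heq_trans; first exact: (CL a mm c hf hg).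
apply: heq_sym; apply: cm2; rewrite /W; tyt.
Qed.

Lemma Wsplit {R : comPzRingType} a b (f g : term R) x y z :
  ty f = Some (y, z) -> ty g = Some (x, y) ->
  heq (cm (Id R (a ++ x ++ b)) [:: W a (Comp f g) b]) (cm (Id R (a ++ x ++ b)) [:: W a f b; W a g b]).
Proof.
move=> hf hg.
apply: heq_trans; first (apply: cm1; rewrite /W; tyt).
apply: heq_trans; first exact: heq_sym (W_comp a b hf hg).
apply: heq_sym; apply: cm2; rewrite /W; tyt.
Qed.

Lemma idins {R : comPzRingType} a mm b :
  heq (cm (Id R (a ++ mm ++ b)) [::]) (cm (Id R (a ++ mm ++ b)) [:: W a (Id R mm) b]).
Proof.
apply: heq_sym; apply: heq_trans; first (apply: cm1; rewrite /W; tyt).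
rewrite cm_nil; exact: W_id.
Qed.

Lemma W_add {R : comPzRingType} a b (A B : term R) x y :
  ty A = Some (x, y) -> ty B = Some (x, y) ->
  heq (W a (Add A B) b) (Add (W a A b) (W a B b)).
Proof.
move=> hA hB; rewrite /W.
apply: heq_trans.
  apply: heq_tens; first exact: hId.
  apply: heq_ax; [exact: ax_tensDl | tyt | tyt].
apply: heq_ax; [exact: ax_tensDr | tyt | tyt].
Qed.


Ltac axc L := apply: heq_ax; [exact: L | by vm_compute | by vm_compute].

Lemma zz1n {R : comPzRingType} :
  heq (cm (Id R [:: Pp]) [:: W [:: Pp] aMP [::]; W [::] cPM [:: Pp]]) (cm (Id R [:: Pp]) [::]).
Proof. exact: (nf_rel (x := [:: Pp]) (y := [:: Pp]) (ltac:(axc ax_zz1)) erefl). Qed.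
Lemma zz2n {R : comPzRingType} :
  heq (cm (Id R [:: Pp]) [:: W [::] aPM [:: Pp]; W [:: Pp] cMP [::]]) (cm (Id R [:: Pp]) [::]).
Proof. exact: (nf_rel (x := [:: Pp]) (y := [:: Pp]) (ltac:(axc ax_zz2)) erefl). Qed.
Lemma X2n {R : comPzRingType} :
  heq (cm (Id R [:: Pp; Pp]) [:: W [::] XX [::]; W [::] XX [::]]) (cm (Id R [:: Pp; Pp]) [::]).
Proof. exact: (nf_rel (x := [:: Pp; Pp]) (y := [:: Pp; Pp]) (ltac:(axc ax_X2)) erefl). Qed.
Lemma braidn {R : comPzRingType} :
  heq (cm (Id R [:: Pp; Pp; Pp]) [:: W [::] XX [:: Pp]; W [:: Pp] XX [::]; W [::] XX [:: Pp]])
      (cm (Id R [:: Pp; Pp; Pp]) [:: W [:: Pp] XX [::]; W [::] XX [:: Pp]; W [:: Pp] XX [::]]).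
Proof. exact: (nf_rel (x := [:: Pp; Pp; Pp]) (y := [:: Pp; Pp; Pp]) (ltac:(axc ax_braid)) erefl). Qed.
Lemma Yrotn {R : comPzRingType} :
  heq (cm (Id R [:: Pp; Mm]) [:: W [::] YY [::]])
      (cm (Id R [:: Pp; Mm]) [:: W [:: Mm; Pp] aPM [::]; W [:: Mm] XX [:: Mm]; W [::] cMP [:: Pp; Mm]]).
Proof. exact: (nf_rel (x := [:: Pp; Mm]) (y := [:: Mm; Pp]) (ltac:(axc ax_Yrot)) erefl). Qed.
Lemma Y'rotn {R : comPzRingType} :
  heq (cm (Id R [:: Mm; Pp]) [:: W [::] YY' [::]])
      (cm (Id R [:: Mm; Pp]) [:: W [::] aMP [:: Pp; Mm]; W [:: Mm] XX [:: Mm]; W [:: Mm; Pp] cPM [::]]).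
Proof. exact: (nf_rel (x := [:: Mm; Pp]) (y := [:: Pp; Mm]) (ltac:(axc ax_Y'rot)) erefl). Qed.

Lemma R1n {R : comPzRingType} :
  heq (cm (Id R [:: Pp; Pp; Mm]) [:: W [::] aPM [:: Pp]; W [:: Pp] YY [::]])
      (cm (Id R [:: Pp; Pp; Mm]) [:: W [:: Pp] aPM [::]; W [::] XX [:: Mm]]).
Proof.
step 1 1 [:: W [::] aPM [:: Pp]; W [:: Pp; Mm; Pp] aPM [::]; W [:: Pp; Mm] XX [:: Mm]; W [:: Pp] cMP [:: Pp; Mm]]
  (wseg [:: Pp] [::] Yrotn (ltac:(by vm_compute))).
step 0 2 [:: W [:: Pp] aPM [::]; W [::] aPM [:: Pp; Pp; Mm]; W [:: Pp; Mm] XX [:: Mm]; W [:: Pp] cMP [:: Pp; Mm]]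
  (CLn [::] [:: Pp] [::] (f := aPM) (g := aPM) erefl erefl).
step 1 2 [:: W [:: Pp] aPM [::]; W [::] XX [:: Mm]; W [::] aPM [:: Pp; Pp; Mm]; W [:: Pp] cMP [:: Pp; Mm]]
  (CLn [::] [::] [:: Mm] (f := aPM) (g := XX) erefl erefl).
step 2 2 [:: W [:: Pp] aPM [::]; W [::] XX [:: Mm]]
  (wseg [::] [:: Pp; Mm] zz2n (ltac:(by vm_compute))).
apply: heq_refl; by vm_compute.
Qed.

Lemma R2n {R : comPzRingType} :
  heq (cm (Id R [:: Pp]) [:: W [:: Pp] YY' [::]; W [::] cPM [:: Pp]])
      (cm (Id R [:: Pp]) [:: W [::] XX [:: Mm]; W [:: Pp] cPM [::]]).
Proof.
step 0 1 [:: W [:: Pp] aMP [:: Pp; Mm]; W [:: Pp; Mm] XX [:: Mm]; W [:: Pp; Mm; Pp] cPM [::]; W [::] cPM [:: Pp]]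
  (wseg [:: Pp] [::] Y'rotn (ltac:(by vm_compute))).
step 2 2 [:: W [:: Pp] aMP [:: Pp; Mm]; W [:: Pp; Mm] XX [:: Mm]; W [::] cPM [:: Pp; Pp; Mm]; W [:: Pp] cPM [::]]
  (heq_sym (CLn [::] [:: Pp] [::] (f := cPM) (g := cPM) erefl erefl)).
step 1 2 [:: W [:: Pp] aMP [:: Pp; Mm]; W [::] cPM [:: Pp; Pp; Mm]; W [::] XX [:: Mm]; W [:: Pp] cPM [::]]
  (heq_sym (CLn [::] [::] [:: Mm] (f := cPM) (g := XX) erefl erefl)).
step 0 2 [:: W [::] XX [:: Mm]; W [:: Pp] cPM [::]]
  (wseg [::] [:: Pp; Mm] zz1n (ltac:(by vm_compute))).
apply: heq_refl; by vm_compute.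
Qed.

Lemma R3n {R : comPzRingType} :
  heq (cm (Id R [::]) [:: W [::] YY [::]; W [::] cPM [::]])
      (cm (Id R [::]) [:: W [:: Mm; Pp] aPM [::]; W [:: Mm] XX [:: Mm]; W [:: Mm; Pp] cPM [::]; W [::] cMP [::]]).
Proof.
step 0 1 [:: W [:: Mm; Pp] aPM [::]; W [:: Mm] XX [:: Mm]; W [::] cMP [:: Pp; Mm]; W [::] cPM [::]]
  (wseg [::] [::] Yrotn (ltac:(by vm_compute))).
step 2 2 [:: W [:: Mm; Pp] aPM [::]; W [:: Mm] XX [:: Mm]; W [:: Mm; Pp] cPM [::]; W [::] cMP [::]]
  (CLn [::] [::] [::] (f := cMP) (g := cPM) erefl erefl).
apply: heq_refl; by vm_compute.
Qed.

Lemma YYid {R : comPzRingType} :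
  heq (Id R [:: Mm; Pp]) (Add (Comp YY YY') (Comp cMP aMP)).
Proof.
set CC := Comp cMP aMP.
apply: heq_sym.
apply: heq_trans; first (apply: heq_add; [axc ax_YY' | apply: heq_refl; by vm_compute]).
apply: heq_trans; first (axc ax_addA).
apply: heq_trans.
  apply: heq_add; first (apply: heq_refl; by vm_compute).
  apply: heq_add; first (apply: heq_refl; by vm_compute).
  apply: heq_sym; axc ax_scale1.
apply: heq_trans.
  apply: heq_add; first (apply: heq_refl; by vm_compute).
  apply: heq_sym; axc ax_scaleDl.
rewrite GRing.addNr.
apply: heq_trans.
  apply: heq_add; first (apply: heq_refl; by vm_compute).
  apply: heq_ax; [exact: (ax_scale0 [:: Mm; Pp] [:: Mm; Pp]) | by vm_compute | by vm_compute].
apply: heq_trans; first (axc ax_addC).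
axc ax_add0.
Qed.

Lemma DA {R : comPzRingType} :
  heq (cm (Id R [:: Pp; Pp]) [:: W [::] XX [::]; W [:: Pp] aPM [:: Pp]; W [:: Pp; Pp] YY [::];
          W [:: Pp; Pp] YY' [::]; W [::] XX [:: Mm; Pp]; W [:: Pp] cPM [:: Pp]])
      (cm (Id R [:: Pp; Pp]) [:: W [:: Pp; Pp] aPM [::]; W [:: Pp] XX [:: Mm]; W [:: Pp; Pp] cPM [::]; W [::] XX [::]]).
Proof.
step 1 2 [:: W [::] XX [::]; W [:: Pp; Pp] aPM [::]; W [:: Pp] XX [:: Mm];
          W [:: Pp; Pp] YY' [::]; W [::] XX [:: Mm; Pp]; W [:: Pp] cPM [:: Pp]]
  (wseg [:: Pp] [::] R1n (ltac:(by vm_compute))).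
step 0 2 [:: W [:: Pp; Pp] aPM [::]; W [::] XX [:: Pp; Mm]; W [:: Pp] XX [:: Mm];
          W [:: Pp; Pp] YY' [::]; W [::] XX [:: Mm; Pp]; W [:: Pp] cPM [:: Pp]]
  (CLn [::] [::] [::] (f := XX) (g := aPM) erefl erefl).
step 3 2 [:: W [:: Pp; Pp] aPM [::]; W [::] XX [:: Pp; Mm]; W [:: Pp] XX [:: Mm];
          W [::] XX [:: Pp; Mm]; W [:: Pp; Pp] YY' [::]; W [:: Pp] cPM [:: Pp]]
  (heq_sym (CLn [::] [::] [::] (f := XX) (g := YY') erefl erefl)).
step 1 3 [:: W [:: Pp; Pp] aPM [::]; W [:: Pp] XX [:: Mm]; W [::] XX [:: Pp; Mm];
          W [:: Pp] XX [:: Mm]; W [:: Pp; Pp] YY' [::]; W [:: Pp] cPM [:: Pp]]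
  (wseg [::] [:: Mm] braidn (ltac:(by vm_compute))).
step 4 2 [:: W [:: Pp; Pp] aPM [::]; W [:: Pp] XX [:: Mm]; W [::] XX [:: Pp; Mm];
          W [:: Pp] XX [:: Mm]; W [:: Pp] XX [:: Mm]; W [:: Pp; Pp] cPM [::]]
  (wseg [:: Pp] [::] R2n (ltac:(by vm_compute))).
step 3 2 [:: W [:: Pp; Pp] aPM [::]; W [:: Pp] XX [:: Mm]; W [::] XX [:: Pp; Mm]; W [:: Pp; Pp] cPM [::]]
  (wseg [:: Pp] [:: Mm] X2n (ltac:(by vm_compute))).
step 0 2 [:: W [:: Pp] aPM [:: Pp]; W [:: Pp; Pp] YY [::]; W [::] XX [:: Pp; Mm]; W [:: Pp; Pp] cPM [::]]
  (heq_sym (wseg [:: Pp] [::] R1n (ltac:(by vm_compute)))).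
step 2 2 [:: W [:: Pp] aPM [:: Pp]; W [:: Pp; Pp] YY [::]; W [:: Pp; Pp] cPM [::]; W [::] XX [::]]
  (CLn [::] [::] [::] (f := XX) (g := cPM) erefl erefl).
step 1 2 [:: W [:: Pp] aPM [:: Pp]; W [:: Pp; Pp; Mm; Pp] aPM [::]; W [:: Pp; Pp; Mm] XX [:: Mm];
          W [:: Pp; Pp; Mm; Pp] cPM [::]; W [:: Pp; Pp] cMP [::]; W [::] XX [::]]
  (wseg [:: Pp; Pp] [::] R3n (ltac:(by vm_compute))).
step 0 2 [:: W [:: Pp; Pp] aPM [::]; W [:: Pp] aPM [:: Pp; Pp; Mm]; W [:: Pp; Pp; Mm] XX [:: Mm];
          W [:: Pp; Pp; Mm; Pp] cPM [::]; W [:: Pp; Pp] cMP [::]; W [::] XX [::]]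
  (CLn [:: Pp] [:: Pp] [::] (f := aPM) (g := aPM) erefl erefl).
step 1 2 [:: W [:: Pp; Pp] aPM [::]; W [:: Pp] XX [:: Mm]; W [:: Pp] aPM [:: Pp; Pp; Mm];
          W [:: Pp; Pp; Mm; Pp] cPM [::]; W [:: Pp; Pp] cMP [::]; W [::] XX [::]]
  (CLn [:: Pp] [::] [:: Mm] (f := aPM) (g := XX) erefl erefl).
step 2 2 [:: W [:: Pp; Pp] aPM [::]; W [:: Pp] XX [:: Mm]; W [:: Pp; Pp] cPM [::];
          W [:: Pp] aPM [:: Pp]; W [:: Pp; Pp] cMP [::]; W [::] XX [::]]
  (CLn [:: Pp] [:: Pp] [::] (f := aPM) (g := cPM) erefl erefl).
step 3 2 [:: W [:: Pp; Pp] aPM [::]; W [:: Pp] XX [:: Mm]; W [:: Pp; Pp] cPM [::]; W [::] XX [::]]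
  (wseg [:: Pp] [::] zz2n (ltac:(by vm_compute))).
apply: heq_refl; by vm_compute.
Qed.

Lemma DB {R : comPzRingType} :
  heq (cm (Id R [:: Pp; Pp]) [:: W [::] XX [::]; W [:: Pp] aPM [:: Pp]; W [:: Pp; Pp] cMP [::];
          W [:: Pp; Pp] aMP [::]; W [::] XX [:: Mm; Pp]; W [:: Pp] cPM [:: Pp]])
      (cm (Id R [:: Pp; Pp]) [::]).
Proof.
step 1 2 [:: W [::] XX [::]; W [:: Pp; Pp] aMP [::]; W [::] XX [:: Mm; Pp]; W [:: Pp] cPM [:: Pp]]
  (wseg [:: Pp] [::] zz2n (ltac:(by vm_compute))).
step 1 2 [:: W [::] XX [::]; W [::] XX [::]; W [:: Pp; Pp] aMP [::]; W [:: Pp] cPM [:: Pp]]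
  (heq_sym (CLn [::] [::] [::] (f := XX) (g := aMP) erefl erefl)).
step 2 2 [:: W [::] XX [::]; W [::] XX [::]]
  (wseg [:: Pp] [::] zz1n (ltac:(by vm_compute))).
step 0 2 [::] (X2n).
apply: heq_refl; by vm_compute.
Qed.

Lemma cm1L {R : comPzRingType} e (L L' : term R) : heq L L' -> heq (cm (Id R e) [:: L]) (cm (Id R e) [:: L']).
Proof. move=> h; rewrite !cm_cons !cm_nil; exact: heq_comp h (hId e). Qed.

Lemma Dn {R : comPzRingType} :
  heq (Comp XX (Tens (dot R) (Id R [:: Pp])))
      (Add (Comp (Tens (Id R [:: Pp]) (dot R)) XX) (Id R [:: Pp; Pp])).
Proof.
apply: heq_trans; first exact: (nf_ok (t := Comp XX (Tens (dot R) (Id R [:: Pp]))) (x := [:: Pp; Pp]) (y := [:: Pp; Pp]) erefl).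
have -> : nf (Comp XX (Tens (dot R) (Id R [:: Pp]))) =
  [:: W [::] XX [::]; W [:: Pp] aPM [:: Pp]; W [::] XX [:: Mm; Pp]; W [:: Pp] cPM [:: Pp]]
  by vm_compute.
step 2 0 [:: W [::] XX [::]; W [:: Pp] aPM [:: Pp]; W [:: Pp; Pp] (Id R [:: Mm; Pp]) [::];
            W [::] XX [:: Mm; Pp]; W [:: Pp] cPM [:: Pp]]
  (idins [:: Pp; Pp] [:: Mm; Pp] [::]).
step 2 1 [:: W [::] XX [::]; W [:: Pp] aPM [:: Pp]; W [:: Pp; Pp] (Add (Comp YY YY') (Comp cMP aMP)) [::];
            W [::] XX [:: Mm; Pp]; W [:: Pp] cPM [:: Pp]]
  (cm1L [:: Pp; Pp; Mm; Pp] (W_cong [:: Pp; Pp] [::] YYid)).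
step 2 1 [:: W [::] XX [::]; W [:: Pp] aPM [:: Pp];
            Add (W [:: Pp; Pp] (Comp YY YY') [::]) (W [:: Pp; Pp] (Comp cMP aMP) [::]);
            W [::] XX [:: Mm; Pp]; W [:: Pp] cPM [:: Pp]]
  (cm1L [:: Pp; Pp; Mm; Pp] (W_add [:: Pp; Pp] [::] (A := Comp YY YY') (B := Comp cMP aMP) erefl erefl)).
apply: heq_trans; first (apply: (cm_add (l1 := [:: W [::] XX [::]; W [:: Pp] aPM [:: Pp]])); by vm_compute).
apply: heq_add.
- step 2 1 [:: W [::] XX [::]; W [:: Pp] aPM [:: Pp]; W [:: Pp; Pp] YY [::]; W [:: Pp; Pp] YY' [::];
            W [::] XX [:: Mm; Pp]; W [:: Pp] cPM [:: Pp]]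
    (Wsplit [:: Pp; Pp] [::] (f := YY) (g := YY') erefl erefl).
  apply: heq_trans; first exact: DA.
  apply: heq_sym; apply: heq_trans;
    first exact: (nf_ok (t := Comp (Tens (Id R [:: Pp]) (dot R)) XX) (x := [:: Pp; Pp]) (y := [:: Pp; Pp]) erefl).
  apply: heq_refl; by vm_compute.
- step 2 1 [:: W [::] XX [::]; W [:: Pp] aPM [:: Pp]; W [:: Pp; Pp] cMP [::]; W [:: Pp; Pp] aMP [::];
            W [::] XX [:: Mm; Pp]; W [:: Pp] cPM [:: Pp]]
    (Wsplit [:: Pp; Pp] [::] (f := cMP) (g := aMP) erefl erefl).
  apply: heq_trans; first exact: DB.
  rewrite cm_nil; exact: hId.
Qed.


Ltac tyw := rewrite /cm /W /=; tyt.

Tactic Notation "stepw" constr(i) constr(j) uconstr(lp) uconstr(H) :=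
  eapply heq_trans; [ eapply (@stepn' _ _ _ i j _ _ lp); [ exact H | tyw | tyw | vm_compute; reflexivity ] | ].

Definition circ {R : comPzRingType} (u : term R) := Comp aMP (Comp (Tens (Id R [:: Mm]) u) cMP).
Definition cw {R : comPzRingType} (v : term R) := Comp aPM (Comp (Tens v (Id R [:: Mm])) cPM).
Definition tr {R : comPzRingType} (Z : term R) :=
  Comp (Tens (Id R [:: Pp]) aPM) (Comp (Tens Z (Id R [:: Mm])) (Tens (Id R [:: Pp]) cPM)).

Lemma Wl {R : comPzRingType} a (t : term R) x y : ty t = Some (x, y) -> heq (Tens (Id R a) t) (W a t [::]).
Proof. move=> ht; apply: heq_tens; first exact: hId. apply: heq_sym; apply: tens1r; tyt. Qed.
Lemma Wr {R : comPzRingType} b (t : term R) x y : ty t = Some (x, y) -> heq (Tens t (Id R b)) (W [::] t b).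
Proof. move=> ht; apply: heq_sym; apply: tens1l; tyt. Qed.
Lemma W00 {R : comPzRingType} (t : term R) x y : ty t = Some (x, y) -> heq t (W [::] t [::]).
Proof. move=> ht; apply: heq_sym; exact: W0 ht. Qed.

Lemma lay1 {R : comPzRingType} (A L : term R) e z : heq A L -> ty L = Some (e, z) -> heq A (cm (Id R e) [:: L]).
Proof. move=> h hL; apply: heq_trans h _; apply: heq_sym; exact: cm1 hL. Qed.

Lemma circ_l {R : comPzRingType} (u : term R) : ty u = Some ([:: Pp], [:: Pp]) ->
  heq (circ u) (cm (Id R [::]) [:: W [::] aMP [::]; W [:: Mm] u [::]; W [::] cMP [::]]).
Proof.
move=> hu; rewrite /circ.
have -> : [:: W [::] aMP [::]; W [:: Mm] u [::]; W [::] cMP [::]] =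
  [:: W [::] aMP [::]] ++ ([:: W [:: Mm] u [::]] ++ [:: W [::] cMP [::]]) by [].
apply: cm_comp; first (apply: lay1; [apply: W00 | ]; tyw).
  apply: cm_comp; first (apply: lay1; [apply: Wl | ]; tyw).
    apply: lay1; [apply: W00 | ]; tyw.
  tyw.
tyw.
Qed.

Lemma cw_l {R : comPzRingType} (v : term R) : ty v = Some ([:: Pp], [:: Pp]) ->
  heq (cw v) (cm (Id R [::]) [:: W [::] aPM [::]; W [::] v [:: Mm]; W [::] cPM [::]]).
Proof.
move=> hu; rewrite /cw.
have -> : [:: W [::] aPM [::]; W [::] v [:: Mm]; W [::] cPM [::]] =
  [:: W [::] aPM [::]] ++ ([:: W [::] v [:: Mm]] ++ [:: W [::] cPM [::]]) by [].
apply: cm_comp; first (apply: lay1; [apply: W00 | ]; tyw).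
  apply: cm_comp; first (apply: lay1; [apply: Wr | ]; tyw).
    apply: lay1; [apply: W00 | ]; tyw.
  tyw.
tyw.
Qed.

Lemma tr_l {R : comPzRingType} (Z : term R) : ty Z = Some ([:: Pp; Pp], [:: Pp; Pp]) ->
  heq (tr Z) (cm (Id R [:: Pp]) [:: W [:: Pp] aPM [::]; W [::] Z [:: Mm]; W [:: Pp] cPM [::]]).
Proof.
move=> hu; rewrite /tr.
have -> : [:: W [:: Pp] aPM [::]; W [::] Z [:: Mm]; W [:: Pp] cPM [::]] =
  [:: W [:: Pp] aPM [::]] ++ ([:: W [::] Z [:: Mm]] ++ [:: W [:: Pp] cPM [::]]) by [].
apply: cm_comp; first (apply: lay1; [apply: Wl | ]; tyw).
  apply: cm_comp; first (apply: lay1; [apply: Wr | ]; tyw).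
    apply: lay1; [apply: Wl | ]; tyw.
  tyw.
tyw.
Qed.

Lemma leftcurln {R : comPzRingType} :
  heq (cm (Id R [:: Pp]) [:: W [::] aMP [:: Pp]; W [:: Mm] XX [::]; W [::] cMP [:: Pp]])
      (cm (Id R [:: Pp]) [:: W [::] (Zero R [:: Pp] [:: Pp]) [::]]).
Proof. exact: (nf_rel (x := [:: Pp]) (y := [:: Pp]) (ltac:(axc ax_leftcurl)) erefl). Qed.

Lemma expand {R : comPzRingType} a b x y (t : term R) l : heq t (cm (Id R x) l) -> ty t = Some (x, y) ->
  heq (cm (Id R (a ++ x ++ b)) [:: W a t b]) (cm (Id R (a ++ x ++ b)) (map (wk a b) l)).
Proof.
move=> h ht; have hl : ty (cm (Id R x) l) <> None by rewrite -(heq_ty h) ht.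
apply: heq_trans; first (apply: cm1; rewrite /W; tyt).
apply: heq_trans; first exact: W_cong h.
exact: W_cm_id.
Qed.

Lemma idrem {R : comPzRingType} a mm b :
  heq (cm (Id R (a ++ mm ++ b)) [:: W a (Id R mm) b]) (cm (Id R (a ++ mm ++ b)) [::]).
Proof. exact: heq_sym (idins _ _ _). Qed.

Lemma Zl {R : comPzRingType} (u v : term R) : ty u = Some ([:: Pp], [:: Pp]) -> ty v = Some ([:: Pp], [:: Pp]) ->
  heq (Comp (Tens (Id R [:: Pp]) u) (Comp XX (Tens v (Id R [:: Pp]))))
      (cm (Id R [:: Pp; Pp]) [:: W [:: Pp] u [::]; W [::] XX [::]; W [::] v [:: Pp]]).
Proof.
move=> hu hv.
have -> : [:: W [:: Pp] u [::]; W [::] XX [::]; W [::] v [:: Pp]] =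
  [:: W [:: Pp] u [::]] ++ ([:: W [::] XX [::]] ++ [:: W [::] v [:: Pp]]) by [].
apply: cm_comp; first (apply: lay1; [apply: Wl | ]; tyw).
  apply: cm_comp; first (apply: lay1; [apply: W00 | ]; tyw).
    apply: lay1; [apply: Wr | ]; tyw.
  tyw.
tyw.
Qed.

Lemma zcol {R : comPzRingType} (A B C : term R) :
  ty A = Some ([:: Pp; Mm], [::]) -> ty B = Some ([:: Pp; Mm], [:: Pp; Mm]) -> ty C = Some ([::], [:: Pp; Mm]) ->
  heq (cm (Id R [::]) [:: A; B; W [::] (Zero R [:: Pp] [:: Pp]) [:: Mm]; C]) (Zero R [::] [::]).
Proof.
move=> hA hB hC; rewrite !cm_cons cm_nil.
have hZ : heq (W [::] (Zero R [:: Pp] [:: Pp]) [:: Mm]) (Zero R [:: Pp; Mm] [:: Pp; Mm]).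
  rewrite /W; apply: heq_trans.
    apply: heq_tens; first exact: hId.
    apply: heq_ax; [exact: (ax_tens0l _ _ [:: Pp; Mm] [:: Pp; Mm]) | by [] | by []].
  apply: heq_ax; [exact: (ax_tens0r _ _ [:: Pp; Mm] [:: Pp; Mm]) | by [] | by []].
have h1 : heq (Comp (W [::] (Zero R [:: Pp] [:: Pp]) [:: Mm]) (Comp C (Id R [::]))) (Zero R [::] [:: Pp; Mm]).
  apply: heq_trans; first (apply: heq_comp; [exact: hZ | apply: heq_refl; tyt]).
  apply: heq_ax; [exact: ax_comp0l | tyt | tyt].
apply: heq_trans; first (apply: heq_comp; [apply: heq_refl; tyt | apply: heq_comp; [apply: heq_refl; tyt | exact: h1]]).
apply: heq_trans; first (apply: heq_comp; [apply: heq_refl; tyt | apply: heq_ax; [exact: (ax_comp0r [::] [:: Pp; Mm] [:: Pp; Mm] B) | tyt | tyt]]).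
apply: heq_ax; [exact: ax_comp0r | tyt | tyt].
Qed.

Lemma V3 {R : comPzRingType} (u : term R) : ty u = Some ([:: Pp], [:: Pp]) ->
  heq (circ (tr (Comp (Tens (Id R [:: Pp]) u) (Comp XX (Tens (Id R [:: Pp]) (Id R [:: Pp]))))))
      (Zero R [::] [::]).
Proof.
move=> hu.
have hp : ty (Id R [:: Pp]) = Some ([:: Pp], [:: Pp]) by [].
set Z := Comp _ _.
have hZ : ty Z = Some ([:: Pp; Pp], [:: Pp; Pp]) by rewrite /Z; tyt.
apply: heq_trans; first (apply: circ_l; rewrite /tr; tyt).
stepw 1 1 [:: W [::] aMP [::]; W [:: Mm; Pp] aPM [::]; W [:: Mm] Z [:: Mm]; W [:: Mm; Pp] cPM [::]; W [::] cMP [::]]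
  (expand [:: Mm] [::] (tr_l hZ) (ltac:(rewrite /tr; tyt))).
stepw 2 1 [:: W [::] aMP [::]; W [:: Mm; Pp] aPM [::]; W [:: Mm; Pp] u [:: Mm]; W [:: Mm] XX [:: Mm];
              W [:: Mm] (Id R [:: Pp]) [:: Pp; Mm]; W [:: Mm; Pp] cPM [::]; W [::] cMP [::]]
  (expand [:: Mm] [:: Mm] (Zl hu hp) hZ).
stepw 4 1 [:: W [::] aMP [::]; W [:: Mm; Pp] aPM [::]; W [:: Mm; Pp] u [:: Mm]; W [:: Mm] XX [:: Mm];
              W [:: Mm; Pp] cPM [::]; W [::] cMP [::]]
  (idrem [:: Mm] [:: Pp] [:: Pp; Mm]).
stepw 4 2 [:: W [::] aMP [::]; W [:: Mm; Pp] aPM [::]; W [:: Mm; Pp] u [:: Mm]; W [:: Mm] XX [:: Mm];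
              W [::] cMP [:: Pp; Mm]; W [::] cPM [::]]
  (heq_sym (CLn [::] [::] [::] (f := cMP) (g := cPM) erefl erefl)).
stepw 0 2 [:: W [::] aPM [::]; W [::] aMP [:: Pp; Mm]; W [:: Mm; Pp] u [:: Mm]; W [:: Mm] XX [:: Mm];
              W [::] cMP [:: Pp; Mm]; W [::] cPM [::]]
  (CLn [::] [::] [::] (f := aMP) (g := aPM) erefl erefl).
stepw 1 2 [:: W [::] aPM [::]; W [::] u [:: Mm]; W [::] aMP [:: Pp; Mm]; W [:: Mm] XX [:: Mm];
              W [::] cMP [:: Pp; Mm]; W [::] cPM [::]]
  (CLn [::] [::] [:: Mm] (f := aMP) (g := u) erefl hu).
stepw 2 3 [:: W [::] aPM [::]; W [::] u [:: Mm]; W [::] (Zero R [:: Pp] [:: Pp]) [:: Mm]; W [::] cPM [::]]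
  (wseg [::] [:: Mm] leftcurln (ltac:(by vm_compute))).
apply: zcol; tyt.
Qed.

Lemma Tl {R : comPzRingType} (u v : term R) : ty u = Some ([:: Pp], [:: Pp]) -> ty v = Some ([:: Pp], [:: Pp]) ->
  heq (Tens u v) (cm (Id R [:: Pp; Pp]) [:: W [::] u [:: Pp]; W [:: Pp] v [::]]).
Proof.
move=> hu hv.
apply: (heq_trans (t := Comp (Tens u (Id R [:: Pp])) (Tens (Id R [:: Pp]) v))).
  apply: heq_sym; apply: heq_trans; first exact: (inter (s:=u) (t:=Id R [:: Pp]) (u:=Id R [:: Pp]) (v:=v) hu erefl erefl hv).
  apply: heq_tens; [exact: idr hu | exact: idl hv].
have -> : [:: W [::] u [:: Pp]; W [:: Pp] v [::]] = [:: W [::] u [:: Pp]] ++ [:: W [:: Pp] v [::]] by [].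
apply: cm_comp; first (apply: lay1; [apply: Wr | ]; tyw).
  apply: lay1; [apply: Wl | ]; tyw.
tyw.
Qed.

Lemma V2t {R : comPzRingType} (u v : term R) : ty u = Some ([:: Pp], [:: Pp]) -> ty v = Some ([:: Pp], [:: Pp]) ->
  heq (circ (tr (Tens u v))) (Comp (circ u) (cw v)).
Proof.
move=> hu hv.
have hT : ty (Tens u v) = Some ([:: Pp; Pp], [:: Pp; Pp]) by tyt.
have hs : ty (cw v) = Some ([::], [::]) by rewrite /cw; tyt.
apply: heq_trans; first (apply: circ_l; rewrite /tr; tyt).
stepw 1 1 [:: W [::] aMP [::]; W [:: Mm; Pp] aPM [::]; W [:: Mm] (Tens u v) [:: Mm]; W [:: Mm; Pp] cPM [::]; W [::] cMP [::]]
  (expand [:: Mm] [::] (tr_l hT) (ltac:(rewrite /tr; tyt))).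
stepw 2 1 [:: W [::] aMP [::]; W [:: Mm; Pp] aPM [::]; W [:: Mm] u [:: Pp; Mm]; W [:: Mm; Pp] v [:: Mm];
              W [:: Mm; Pp] cPM [::]; W [::] cMP [::]]
  (expand [:: Mm] [:: Mm] (Tl hu hv) hT).
stepw 1 2 [:: W [::] aMP [::]; W [:: Mm] u [::]; W [:: Mm; Pp] aPM [::]; W [:: Mm; Pp] v [:: Mm];
              W [:: Mm; Pp] cPM [::]; W [::] cMP [::]]
  (heq_sym (CLn [:: Mm] [::] [::] (f := u) (g := aPM) hu erefl)).
stepw 2 3 [:: W [::] aMP [::]; W [:: Mm] u [::]; W [:: Mm; Pp] (cw v) [::]; W [::] cMP [::]]
  (heq_sym (expand [:: Mm; Pp] [::] (cw_l hv) hs)).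
stepw 2 2 [:: W [::] aMP [::]; W [:: Mm] u [::]; W [::] cMP [::]; W [::] (cw v) [::]]
  (heq_sym (CLn [::] [::] [::] (f := cMP) (g := cw v) erefl hs)).
apply: heq_sym.
have -> : [:: W [::] aMP [::]; W [:: Mm] u [::]; W [::] cMP [::]; W [::] (cw v) [::]] =
  [:: W [::] aMP [::]; W [:: Mm] u [::]; W [::] cMP [::]] ++ [:: W [::] (cw v) [::]] by [].
apply: cm_comp; first exact: circ_l hu.
  apply: lay1; [apply: W00 | ]; tyw.
rewrite /circ; tyt.
Qed.

Lemma V1 {R : comPzRingType} (u : term R) : ty u = Some ([:: Pp], [:: Pp]) ->
  heq (circ (Comp (dot R) u)) (circ (tr (Comp (Tens (Id R [:: Pp]) (Id R [:: Pp])) (Comp XX (Tens u (Id R [:: Pp])))))).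
Proof.
move=> hu.
have hp : ty (Id R [:: Pp]) = Some ([:: Pp], [:: Pp]) by [].
have hd : ty (dot R) = Some ([:: Pp], [:: Pp]) by [].
set Z := Comp _ (Comp XX _).
have hZ : ty Z = Some ([:: Pp; Pp], [:: Pp; Pp]) by rewrite /Z; tyt.
set L := [:: W [::] aMP [::]; W [:: Mm; Pp] aPM [::]; W [:: Mm] XX [:: Mm]; W [:: Mm; Pp] cPM [::];
              W [:: Mm] u [::]; W [::] cMP [::]].
apply: (heq_trans (t := cm (Id R [::]) L)).
  apply: heq_trans; first (apply: circ_l; tyt).
  stepw 1 1 [:: W [::] aMP [::]; W [:: Mm] (dot R) [::]; W [:: Mm] u [::]; W [::] cMP [::]]
    (Wsplit [:: Mm] [::] hd hu).
  stepw 1 1 L (expand [:: Mm] [::] (tr_l (Z := XX) erefl) hd).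
  apply: heq_refl; tyw.
apply: heq_sym.
apply: heq_trans; first (apply: circ_l; rewrite /tr; tyt).
stepw 1 1 [:: W [::] aMP [::]; W [:: Mm; Pp] aPM [::]; W [:: Mm] Z [:: Mm]; W [:: Mm; Pp] cPM [::]; W [::] cMP [::]]
  (expand [:: Mm] [::] (tr_l hZ) (ltac:(rewrite /tr; tyt))).
stepw 2 1 [:: W [::] aMP [::]; W [:: Mm; Pp] aPM [::]; W [:: Mm; Pp] (Id R [:: Pp]) [:: Mm]; W [:: Mm] XX [:: Mm];
              W [:: Mm] u [:: Pp; Mm]; W [:: Mm; Pp] cPM [::]; W [::] cMP [::]]
  (expand [:: Mm] [:: Mm] (Zl hp hu) hZ).
stepw 2 1 [:: W [::] aMP [::]; W [:: Mm; Pp] aPM [::]; W [:: Mm] XX [:: Mm];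
              W [:: Mm] u [:: Pp; Mm]; W [:: Mm; Pp] cPM [::]; W [::] cMP [::]]
  (idrem [:: Mm; Pp] [:: Pp] [:: Mm]).
stepw 3 2 L (CLn [:: Mm] [::] [::] (f := u) (g := cPM) hu erefl).
apply: heq_refl; tyw.
Qed.


Lemma tyD {R : comPzRingType} k : ty (dotpow R k) = Some ([:: Pp], [:: Pp]).
Proof. elim: k => [|k IH] //=; by rewrite IH. Qed.

Lemma compA' {R : comPzRingType} (s t u : term R) :
  ty (Comp s (Comp t u)) <> None -> heq (Comp (Comp s t) u) (Comp s (Comp t u)).
Proof. move=> h; apply: heq_ax; [exact: ax_compA | by rewrite !ty_Comp tyC_assoc | by rewrite !ty_Comp tyC_assoc]. Qed.

Lemma dcomm {R : comPzRingType} j : heq (Comp (dotpow R j) (dot R)) (dotpow R j.+1).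
Proof.
have hd : ty (dot R) = Some ([:: Pp], [:: Pp]) by [].
elim: j => [|j IH] /=.
  apply: heq_trans; first (apply: idl; exact: hd).
  apply: heq_sym; apply: idr; exact: hd.
have hj := tyD (R := R) j.
apply: heq_trans; first (apply: compA'; tyt).
apply: heq_comp; first (apply: heq_refl; tyt).
exact: IH.
Qed.

Lemma Alg {R : comPzRingType} j k :
  heq (Comp (Tens (Id R [:: Pp]) (dotpow R j)) (Comp XX (Tens (dotpow R k.+1) (Id R [:: Pp]))))
      (Add (Comp (Tens (Id R [:: Pp]) (dotpow R j.+1)) (Comp XX (Tens (dotpow R k) (Id R [:: Pp]))))
           (Tens (dotpow R k) (dotpow R j))).
Proof.
have hd : ty (dot R) = Some ([:: Pp], [:: Pp]) by [].
have hj := tyD (R := R) j; have hk := tyD (R := R) k.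
have hp : ty (Id R [:: Pp]) = Some ([:: Pp], [:: Pp]) by [].
set xj := dotpow R j; set xk := dotpow R k.
have -> : dotpow R k.+1 = Comp (dot R) xk by [].
have -> : dotpow R j.+1 = Comp (dot R) (dotpow R j) by [].
set A := Tens (Id R [:: Pp]) xj.
set T1 := Tens (dot R) (Id R [:: Pp]).
set T2 := Tens xk (Id R [:: Pp]).
have hA : ty A = Some ([:: Pp; Pp], [:: Pp; Pp]) by rewrite /A; tyt.
have hT1 : ty T1 = Some ([:: Pp; Pp], [:: Pp; Pp]) by rewrite /T1; tyt.
have hT2 : ty T2 = Some ([:: Pp; Pp], [:: Pp; Pp]) by rewrite /T2; tyt.
have hX : ty (XX : term R) = Some ([:: Pp; Pp], [:: Pp; Pp]) by [].
have s1 : heq (Tens (Comp (dot R) xk) (Id R [:: Pp])) (Comp T1 T2).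
  apply: heq_sym; apply: heq_trans; first exact: (inter (s:=dot R) (t:=Id R [:: Pp]) (u:=xk) (v:=Id R [:: Pp]) hd hk hp hp).
  apply: heq_tens; [apply: heq_refl; tyt | exact: idl hp].
apply: heq_trans; first (apply: heq_comp; [apply: heq_refl; tyt | apply: heq_comp; [apply: heq_refl; tyt | exact: s1]]).
apply: heq_trans; first (apply: heq_comp; [apply: heq_refl; tyt | apply: heq_sym; apply: compA'; tyt]).
apply: heq_trans; first (apply: heq_comp; [apply: heq_refl; tyt | apply: heq_comp; [exact: Dn | apply: heq_refl; tyt]]).
set B := Tens (Id R [:: Pp]) (dot R).
have hB : ty B = Some ([:: Pp; Pp], [:: Pp; Pp]) by rewrite /B; tyt.
apply: heq_trans; first (apply: heq_comp; [apply: heq_refl; tyt | apply: heq_ax; [exact: ax_compDl | tyt | tyt]]).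
apply: heq_trans; first (apply: heq_ax; [exact: ax_compDr | tyt | tyt]).
apply: heq_add.
- apply: heq_trans; first (apply: heq_comp; [apply: heq_refl; tyt | apply: compA'; tyt]).
  apply: heq_trans; first (apply: heq_sym; apply: compA'; tyt).
  apply: heq_comp; last (apply: heq_refl; tyt).
  apply: heq_trans; first exact: (inter (s:=Id R [:: Pp]) (t:=xj) (u:=Id R [:: Pp]) (v:=dot R) hp hp hj hd).
  apply: heq_tens; first exact: idl hp.
  exact: (dcomm j).
- apply: heq_trans; first (apply: heq_comp; [apply: heq_refl; tyt | apply: idl; exact: hT2]).
  apply: heq_trans; first exact: (inter (s:=Id R [:: Pp]) (t:=xj) (u:=xk) (v:=Id R [:: Pp]) hp hk hj hp).
  apply: heq_tens; [exact: idl hk | exact: idr hj].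
Qed.

Lemma tr_cong {R : comPzRingType} (Z Z' : term R) : heq Z Z' -> heq (tr Z) (tr Z').
Proof.
move=> h; rewrite /tr; apply: heq_comp; first by apply: heq_refl.
apply: heq_comp; last by apply: heq_refl.
apply: heq_tens => //; exact: hId.
Qed.

Lemma circ_cong {R : comPzRingType} (Z Z' : term R) : heq Z Z' -> heq (circ Z) (circ Z').
Proof.
move=> h; rewrite /circ; apply: heq_comp; first by apply: heq_refl.
apply: heq_comp; last by apply: heq_refl.
apply: heq_tens => //; exact: hId.
Qed.

Lemma tr_add {R : comPzRingType} (P Q : term R) :
  ty P = Some ([:: Pp; Pp], [:: Pp; Pp]) -> ty Q = Some ([:: Pp; Pp], [:: Pp; Pp]) ->
  heq (tr (Add P Q)) (Add (tr P) (tr Q)).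
Proof.
move=> hP hQ; rewrite /tr.
apply: heq_trans.
  apply: heq_comp; first (apply: heq_refl; tyt).
  apply: heq_comp; last (apply: heq_refl; tyt).
  apply: heq_ax; [exact: ax_tensDl | tyt | tyt].
apply: heq_trans.
  apply: heq_comp; first (apply: heq_refl; tyt).
  apply: heq_ax; [exact: ax_compDl | tyt | tyt].
apply: heq_ax; [exact: ax_compDr | tyt | tyt].
Qed.

Lemma circ_add {R : comPzRingType} (P Q : term R) :
  ty P = Some ([:: Pp], [:: Pp]) -> ty Q = Some ([:: Pp], [:: Pp]) ->
  heq (circ (Add P Q)) (Add (circ P) (circ Q)).
Proof.
move=> hP hQ; rewrite /circ.
apply: heq_trans.
  apply: heq_comp; first (apply: heq_refl; tyt).
  apply: heq_comp; last (apply: heq_refl; tyt).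
  apply: heq_ax; [exact: ax_tensDr | tyt | tyt].
apply: heq_trans.
  apply: heq_comp; first (apply: heq_refl; tyt).
  apply: heq_ax; [exact: ax_compDl | tyt | tyt].
apply: heq_ax; [exact: ax_compDr | tyt | tyt].
Qed.

Definition EE {R : comPzRingType} j k :=
  circ (tr (Comp (Tens (Id R [:: Pp]) (dotpow R j)) (Comp XX (Tens (dotpow R k) (Id R [:: Pp]))))).

Lemma Estep {R : comPzRingType} j k :
  heq (EE (R := R) j k.+1) (Add (Comp (ct_ R k) (c_ R j)) (EE (R := R) j.+1 k)).
Proof.
have hj := tyD (R := R) j; have hk := tyD (R := R) k; have hj1 := tyD (R := R) j.+1.
rewrite /EE.
apply: heq_trans; first exact: circ_cong (tr_cong (Alg j k)).
apply: heq_trans; first (apply: circ_cong; apply: tr_add; tyt).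
apply: heq_trans; first (apply: circ_add; rewrite /tr; tyt).
apply: heq_trans; first (apply: heq_add; [apply: heq_refl; rewrite /circ /tr; tyt | exact: V2t hk hj]).
apply: heq_ax; [exact: ax_addC | rewrite /circ /cw /tr; tyt | rewrite /circ /cw /tr; tyt].
Qed.


Lemma ty_sum1 {R : comPzRingType} (f : nat -> term R) s :
  (forall a, ty (f a) = Some ([::], [::])) -> ty (sum1 (map f s)) = Some ([::], [::]).
Proof. move=> hf; elim: s => [|x s IH] //=; by rewrite hf IH eqxx. Qed.

Lemma sum_rcons {R : comPzRingType} (f : nat -> term R) s t :
  (forall a, ty (f a) = Some ([::], [::])) -> ty t = Some ([::], [::]) ->
  heq (sum1 (rcons (map f s) t)) (Add t (sum1 (map f s))).
Proof.
move=> hf ht; elim: s => [|x s IH] /=.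
  apply: heq_refl; by rewrite /= ht.
have hs := ty_sum1 s hf.
have hx := hf x.
apply: heq_trans; first (apply: heq_add; [apply: heq_refl; by rewrite hx | exact: IH]).
apply: heq_trans; first (apply: heq_sym; apply: heq_ax; [exact: ax_addA | tyt | tyt]).
apply: heq_trans; first (apply: heq_add; [apply: heq_ax; [exact: ax_addC | tyt | tyt] | apply: heq_refl; tyt]).
apply: heq_ax; [exact: ax_addA | tyt | tyt].
Qed.

Lemma Esum {R : comPzRingType} k : forall j,
  heq (EE (R := R) j k) (sum1 [seq Comp (ct_ R a) (c_ R (j + k.-1 - a)) | a <- iota 0 k]).
Proof.
elim: k => [|k IH] j.
  rewrite /EE /=; exact: V3 (tyD j).
apply: heq_trans; first exact: Estep.
have hf : forall a, ty (Comp (ct_ R a) (c_ R (j + k - a))) = Some ([::], [::]).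
  move=> a; have ha := tyD (R := R) a; have hb := tyD (R := R) (j + k - a).
  rewrite /ct_ /c_; tyt.
have ht : ty (Comp (ct_ R k) (c_ R j)) = Some ([::], [::]).
  have ha := tyD (R := R) k; have hb := tyD (R := R) j; rewrite /ct_ /c_; tyt.
have Ei : iota 0 k.+1 = rcons (iota 0 k) k by rewrite -addn1 iotaD cats1.
rewrite Ei map_rcons /= addnK.
apply: heq_trans; last exact: heq_sym (sum_rcons _ hf ht).
apply: heq_add; first (apply: heq_refl; by rewrite ht).
have -> : [seq Comp (ct_ R a) (c_ R (j + k - a)) | a <- iota 0 k] =
          [seq Comp (ct_ R a) (c_ R (j.+1 + k.-1 - a)) | a <- iota 0 k].
  apply/eq_in_map => a; rewrite mem_iota => /andP [_ ha].
  have -> : (j + k - a = j.+1 + k.-1 - a)%N by lia.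
  by [].
exact: IH.
Qed.


Theorem proposition2 (R : comPzRingType) (k : nat) : (1 <= k)%N ->
  heq (ct_ R k.+1)
      (sum1 [seq Comp (ct_ R a) (c_ R (k.-1 - a)) | a <- iota 0 k]).
Proof.
move=> _.
apply: heq_trans; first exact: (V1 (tyD (R := R) k)).
have := Esum (R := R) k 0.
by under eq_map => a do rewrite add0n.
Qed.
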